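(* Let $n$ be even and fix $\ell,D>0$. Let $\mathcal A$ be a first-order $p$-SCLI and let $z^{(t)}$ denote its iterates. Then there are constants $c_{\mathcal A},T_{\mathcal A}>0$ such that for every $T\ge T_{\mathcal A}$ there exist $F\in\mathcal F^{\mathrm{bil}}_{n,\ell,D}$, initial points $z^{(0)},z^{(-1)},\dots,z^{(-p+1)}\in\mathcal D_D$ and $T'\in\{T,T+1,\dots,T+p-1\}$ such that the iterates of $\mathcal A$ run on $F$ from this initialization satisfy $$\mathrm{Gap}_F^{\mathcal D_{2D}}(z^{(T')})\ge\frac{c_{\mathcal A}\,\ell D^2}{\sqrt T}.$$
   Context: A first-order $p$-SCLI is specified by fixed real scalars $\alpha_0,\dots,\alpha_{p-1},\beta_0,\dots,\beta_{p-1}$: given an operator $F:\mathbb R^n\to\mathbb R^n$ and initial points $z^{(0)},z^{(-1)},\dots,z^{(-p+1)}\in\mathbb R^n$, it generates $z^{(t)}=\sum_{j=0}^{p-1}\big(\alpha_jF(z^{(t-p+j)})+\beta_jz^{(t-p+j)}\big)$ for $t=1,2,\dots$. Write $z=(x,y)$ with $x,y\in\mathbb R^{n/2}$. For $R>0$, $\mathcal D_R:=\{x:\|x\|\le R\}\times\{y:\|y\|\le R\}\subset\mathbb R^{n/2}\times\mathbb R^{n/2}$. $\mathcal F^{\mathrm{bil}}_{n,\ell,D}$ is the set of $\ell$-Lipschitz operators $F:\mathbb R^n\to\mathbb R^n$ of the form $F(x,y)=(\nabla_xf(x,y),-\nabla_yf(x,y))$ where $f(x,y)=x^\top My+b_1^\top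 x+b_2^\top y$ for some $M\in\mathbb R^{(n/2)\times(n/2)}$, $b_1,b_2\in\mathbb R^{n/2}$, such that $F$ has a unique zero $z^*$ and $z^*\in\mathcal D_D$. For such $F$ (coming from $f$), $\mathrm{Gap}_F^{\mathcal D_{2D}}(x,y):=\max_{\|y'\|\le 2D}f(x,y')-\min_{\|x'\|\le 2D}f(x',y)$ (the total gap of the two-player zero-sum game with costs $f$ and $-f$). *)

(* Defs.v *)
From HB Require Import structures.
From mathcomp Require Import all_boot all_order all_algebra.
From mathcomp Require Import boolp classical_sets reals.
Set Implicit Arguments. Unset Strict Implicit. Unset Printing Implicit Defensive.
Import Order.TTheory GRing.Theory Num.Theory.
Local Open Scope ring_scope.
Local Open Scope classical_set_scope.

Section Defs.
Variable R : realType.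

Definition enorm (q : nat) (v : 'rV[R]_q) : R := Num.sqrt (\sum_i v ord0 i ^+ 2).

Variable k : nat. (* k = n/2 ; a point z = (x, y) is a row vector of size k + k *)
Notation V := 'rV[R]_(k + k).

Definition inD (r : R) (z : V) : Prop :=
  enorm (lsubmx z) <= r /\ enorm (rsubmx z) <= r.

Definition bil_f (M : 'M[R]_k) (b1 b2 : 'rV[R]_k) (x y : 'rV[R]_k) : R :=
  (x *m M *m y^T) ord0 ord0 + (b1 *m x^T) ord0 ord0 + (b2 *m y^T) ord0 ord0.

(* F(x,y) = (grad_x f, - grad_y f) = (M y + b1, - M^T x - b2) *)
Definition bil_F (M : 'M[R]_k) (b1 b2 : 'rV[R]_k) (z : V) : V :=
  row_mx (rsubmx z *m M^T + b1) (- (lsubmx z *m M) - b2).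

Definition lipschitz (l : R) (F : V -> V) : Prop :=
  forall z w, enorm (F z - F w) <= l * enorm (z - w).

Definition in_Fbil (l D : R) (M : 'M[R]_k) (b1 b2 : 'rV[R]_k) : Prop :=
  lipschitz l (bil_F M b1 b2) /\
  exists zs : V, bil_F M b1 b2 zs = 0 /\
    (forall w, bil_F M b1 b2 w = 0 -> w = zs) /\ inD D zs.

Definition gap (M : 'M[R]_k) (b1 b2 : 'rV[R]_k) (r : R) (z : V) : R :=
  sup ((fun y' => bil_f M b1 b2 (lsubmx z) y') @` [set y' | enorm y' <= r])
  - inf ((fun x' => bil_f M b1 b2 x' (rsubmx z)) @` [set x' | enorm x' <= r]).

(* p-SCLI.  init i = z^{(-i)} for i < p.  The window at time t is
   win t j = z^{(t - p + 1 + j)} for j < p. *)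
Variables (p : nat) (alpha beta : 'I_p -> R) (F : V -> V) (init : 'I_p -> V).

Definition initf (i : nat) : V := odflt 0 (omap init (insub i : option 'I_p)).

Fixpoint scli_win (t : nat) : nat -> V :=
  match t with
  | 0 => fun j => initf (p.-1 - j)
  | t'.+1 => fun j =>
      if (j.+1 < p)%N then scli_win t' j.+1
      else \sum_(i < p) (alpha i *: F (scli_win t' i) + beta i *: scli_win t' i)
  end.

Definition scli_z (t : nat) : V := scli_win t p.-1.

End Defs.

(* Main.v *)
Require Import Defs.
From HB Require Import structures.
From mathcomp Require Import all_boot all_order all_algebra.
From mathcomp Require Import boolp classical_sets reals.
From mathcomp Require Import complex.
From mathcomp Require Import ring lra zify.
Set Implicit Arguments. Unset Strict Implicit. Unset Printing Implicit Defensive.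
Import Order.TTheory GRing.Theory Num.Theory.
Local Open Scope ring_scope.
Local Open Scope classical_set_scope.

Section VecPart.
Variable R : realType.
Variable k : nat.
Variable i0 : 'I_k.
Local Notation V := 'rV[R]_(k + k).
Local Notation re := (@complex.Re R).
Local Notation im := (@complex.Im R).

Definition ssq (q : nat) (v : 'rV[R]_q) : R := \sum_i v ord0 i ^+ 2.
Definition e0 : 'rV[R]_k := \row_j ((j == i0)%:R).
Definition phi (w : R[i]) : V := row_mx (re w *: e0) (im w *: e0).

Lemma ssq_ge0 q (v : 'rV[R]_q) : 0 <= ssq v.
Proof. by apply: sumr_ge0 => i _; rewrite sqr_ge0. Qed.

Lemma enormE q (v : 'rV[R]_q) : enorm v = Num.sqrt (ssq v).
Proof. by []. Qed.

Lemma ssq_row_mx q1 q2 (a : 'rV[R]_q1) (b : 'rV[R]_q2) :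
  ssq (row_mx a b) = ssq a + ssq b.
Proof.
rewrite /ssq big_split_ord /=; congr (_ + _); apply: eq_bigr => i _.
  by rewrite row_mxEl. by rewrite row_mxEr.
Qed.

Lemma ssqZ q c (a : 'rV[R]_q) : ssq (c *: a) = c ^+ 2 * ssq a.
Proof. rewrite /ssq mulr_sumr; apply: eq_bigr => i _; by rewrite mxE exprMn. Qed.

Lemma ssqN q (a : 'rV[R]_q) : ssq (- a) = ssq a.
Proof. rewrite /ssq; apply: eq_bigr => i _; by rewrite mxE sqrrN. Qed.

Lemma e0E j : e0 ord0 j = (j == i0)%:R.
Proof. by rewrite mxE. Qed.

Lemma ssq_e0 : ssq e0 = 1.
Proof.
rewrite /ssq (bigD1 i0) //= big1 ?addr0; first by rewrite e0E eqxx expr1n.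
by move=> j /negbTE hj; rewrite e0E hj expr0n.
Qed.

Lemma coord_le q (a : 'rV[R]_q) i : a ord0 i ^+ 2 <= ssq a.
Proof.
rewrite /ssq (bigD1 i) //= lerDl; apply: sumr_ge0 => j _; exact: sqr_ge0.
Qed.

Lemma abs_coord_le q (a : 'rV[R]_q) i : `|a ord0 i| <= enorm a.
Proof. by rewrite enormE -sqrtr_sqr ler_sqrt ?ssq_ge0 // coord_le. Qed.

Lemma enorm_e0 c : enorm (c *: e0) = `|c|.
Proof. by rewrite enormE ssqZ ssq_e0 mulr1 sqrtr_sqr. Qed.

Lemma dotE q (x y : 'rV[R]_q) : (x *m y^T) ord0 ord0 = \sum_j x ord0 j * y ord0 j.
Proof. rewrite mxE; apply: eq_bigr => j _; by rewrite mxE. Qed.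

Lemma dot_e0 (y : 'rV[R]_k) : \sum_j e0 ord0 j * y ord0 j = y ord0 i0.
Proof.
rewrite (bigD1 i0) //= big1 ?addr0; first by rewrite e0E eqxx mul1r.
by move=> j /negbTE hj; rewrite e0E hj mul0r.
Qed.

Lemma dot_e0l a (y : 'rV[R]_k) : \sum_j (a *: e0) ord0 j * y ord0 j = a * y ord0 i0.
Proof.
rewrite (bigD1 i0) //= big1 ?addr0; first by rewrite mxE e0E eqxx mulr1.
by move=> j /negbTE hj; rewrite mxE e0E hj mulr0 mul0r.
Qed.

Lemma dot_e0r a (x : 'rV[R]_k) : \sum_j x ord0 j * (a *: e0) ord0 j = a * x ord0 i0.
Proof.
rewrite (bigD1 i0) //= big1 ?addr0; first by rewrite mxE e0E eqxx mulr1 mulrC.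
by move=> j /negbTE hj; rewrite mxE e0E hj mulr0 mulr0.
Qed.

Lemma bil_fE m s x y :
  bil_f (m%:M) 0 (- (m * s) *: e0) x y
  = m * \sum_j x ord0 j * y ord0 j - m * s * y ord0 i0.
Proof.
rewrite /bil_f mul_mx_scalar -scalemxAl mxE dotE mul0mx mxE addr0.
rewrite -scalemxAl mxE dotE dot_e0; lra.
Qed.

Lemma bil_FE m s z :
  bil_F (m%:M) 0 (- (m * s) *: e0) z
  = row_mx (m *: rsubmx z) (- (m *: lsubmx z) + (m * s) *: e0).
Proof.
by rewrite /bil_F tr_scalar_mx !mul_mx_scalar addr0 scaleNr opprK.
Qed.

Lemma lsub_phi w : lsubmx (phi w) = re w *: e0.
Proof. by rewrite row_mxKl. Qed.
Lemma rsub_phi w : rsubmx (phi w) = im w *: e0.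
Proof. by rewrite row_mxKr. Qed.

Lemma F_phi m s w :
  bil_F (m%:M) 0 (- (m * s) *: e0) (phi w)
  = phi (Complex (m * im w) (m * (s - re w))).
Proof.
rewrite bil_FE lsub_phi rsub_phi /phi /= !scalerA -scaleNr -scalerDl.
by congr row_mx; congr (_ *: _); ring.
Qed.

Lemma phiD w1 w2 : phi (w1 + w2) = phi w1 + phi w2.
Proof.
case: w1 => a b; case: w2 => c d.
by rewrite /phi /= add_row_mx !scalerDl.
Qed.

Lemma phi0 : phi 0 = 0.
Proof. by rewrite /phi /= !scale0r row_mx0. Qed.

Lemma phiZ r w : phi (Complex r 0 * w) = r *: phi w.
Proof.
case: w => a b; rewrite /phi /= scale_row_mx !scalerA.
by congr row_mx; congr (_ *: _); ring.
Qed.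

Lemma phi_sum p (f : 'I_p -> R[i]) : phi (\sum_i f i) = \sum_i phi (f i).
Proof. exact: (big_morph phi phiD phi0). Qed.

Lemma inD_phi D w : `|re w| <= D -> `|im w| <= D -> inD D (phi w).
Proof. by move=> h1 h2; rewrite /inD lsub_phi rsub_phi !enorm_e0. Qed.


Lemma Fbil_ok (l D m s : R) : 0 < m -> m <= l -> 0 <= s -> s <= D ->
  in_Fbil l D (m%:M) 0 (- (m * s) *: e0).
Proof.
move=> m0 ml s0 sD; split.
- move=> z w; rewrite !bil_FE.
  have -> : row_mx (m *: rsubmx z) (- (m *: lsubmx z) + (m * s) *: e0)
     - row_mx (m *: rsubmx w) (- (m *: lsubmx w) + (m * s) *: e0)
     = row_mx (m *: rsubmx (z - w)) (- (m *: lsubmx (z - w))).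
    rewrite opp_row_mx add_row_mx !raddfB /=; congr row_mx.
    by rewrite opprD addrACA subrr addr0.
  rewrite !enormE ssq_row_mx ssqN !ssqZ -mulrDr sqrtrM ?sqr_ge0 // sqrtr_sqr gtr0_norm //.
  rewrite addrC -ssq_row_mx hsubmxK.
  by apply: ler_wpM2r; rewrite ?sqrtr_ge0.
- exists (row_mx (s *: e0) 0); split; [|split].
  + by rewrite bil_FE row_mxKl row_mxKr scaler0 scalerA addNr row_mx0.
  + move=> w; rewrite bil_FE -row_mx0 => /eq_row_mx [h1 h2].
    have hr : rsubmx w = 0.
      by move/eqP: h1; rewrite scaler_eq0 (negbTE (lt0r_neq0 m0)) /= => /eqP.
    have hl : lsubmx w = s *: e0.
      move/eqP: h2; rewrite addrC subr_eq0 -scalerA => /eqP /scalerI -> //.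
      exact: lt0r_neq0.
    by rewrite -[w]hsubmxK hr hl.
  + rewrite /inD row_mxKl row_mxKr enorm_e0 -(scale0r e0) enorm_e0 normr0.
    by rewrite ger0_norm //; split=> //; apply: le_trans sD.
Qed.

Lemma gap_phi (m s D : R) w : 0 < m -> 0 < D -> 0 <= s -> s <= D ->
  m * D * (2 * `|re w - s| + `|im w|)
    <= gap (m%:M) 0 (- (m * s) *: e0) (2 * D) (phi w).
Proof.
move=> m0 D0 s0 sD.
rewrite /gap lsub_phi rsub_phi.
have f1 : forall y', bil_f (m%:M) 0 (- (m * s) *: e0) (re w *: e0) y'
    = m * (re w - s) * y' ord0 i0.
  by move=> y'; rewrite bil_fE dot_e0l; ring.
have f2 : forall x', bil_f (m%:M) 0 (- (m * s) *: e0) x' (im w *: e0)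
    = m * im w * x' ord0 i0 - m * s * im w.
  by move=> x'; rewrite bil_fE dot_e0r mxE e0E eqxx (_ : true%:R = 1) //; ring.
set S1 := (fun y' => _) @` _.
set S2 := (fun x' => _) @` _.
have ub : has_ubound S1.
  exists (m * `|re w - s| * (2 * D)) => _ [y' hy' <-]; rewrite f1.
  apply: le_trans (ler_norm _) _; rewrite !normrM gtr0_norm //.
  apply: ler_wpM2l; first by rewrite mulr_ge0 // ltW.
  exact: le_trans (abs_coord_le _ _) hy'.
have lb : has_lbound S2.
  exists (- (m * `|im w| * (2 * D)) - m * s * im w) => _ [x' hx' <-]; rewrite f2.
  rewrite lerD2r.
  have : `|m * im w * x' ord0 i0| <= m * `|im w| * (2 * D).
    rewrite !normrM gtr0_norm //.
    apply: ler_wpM2l; first by rewrite mulr_ge0 // ltW.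
    exact: le_trans (abs_coord_le _ _) hx'.
  by rewrite ler_norml => /andP [].
have h1 : m * (2 * D) * `|re w - s| <= sup S1.
  apply: (ub_le_sup ub).
  exists ((if 0 <= re w - s then 2 * D else - (2 * D)) *: e0).
    rewrite /= enorm_e0; case: ifP => _; rewrite ?normrN gtr0_norm //; lra.
  rewrite f1 mxE e0E eqxx (_ : true%:R = 1) // mulr1.
  case: ifP => h.
    rewrite (ger0_norm h); ring.
  have h' : re w - s < 0 by rewrite ltNge h.
  rewrite (ltr0_norm h'); ring.
have h2 : inf S2 <= - (m * (2 * D) * `|im w|) - m * s * im w.
  apply: (ge_inf lb).
  exists ((if 0 <= im w then - (2 * D) else 2 * D) *: e0).
    rewrite /= enorm_e0; case: ifP => _; rewrite ?normrN gtr0_norm //; lra.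
  rewrite f2 mxE e0E eqxx (_ : true%:R = 1) // mulr1.
  case: ifP => h.
    rewrite (ger0_norm h); ring.
  have h' : im w < 0 by rewrite ltNge h.
  rewrite (ltr0_norm h'); ring.
have h3 : 0 <= m * (D * `|im w| + s * im w).
  apply: mulr_ge0; first exact: ltW.
  have := ler_norm (- im w); rewrite normrN => hn.
  have := normr_ge0 (im w) => hn0.
  nra.
lra.
Qed.

Lemma scli_phi (p : nat) (al be : 'I_p -> R) (F : 'rV[R]_(k + k) -> 'rV[R]_(k + k))
  (g : R[i] -> R[i]) (om : nat -> R[i]) (init : 'I_p -> 'rV[R]_(k + k)) :
  (0 < p)%N -> (forall w, F (phi w) = phi (g w)) ->
  (forall i : 'I_p, init i = phi (om (p.-1 - i)%N)) ->
  (forall t, om (t + p)%N = \sum_(i < p) (Complex (al i) 0 * g (om (t + i)%N)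
                                        + Complex (be i) 0 * om (t + i)%N)) ->
  forall t j, (j < p)%N -> scli_win al be F init t j = phi (om (t + j)%N).
Proof.
move=> p0 hF hinit hrec; elim=> [|t IH] j hj /=.
  have hp : (p.-1 - j < p)%N by rewrite (leq_ltn_trans (leq_subr _ _)) // prednK.
  rewrite /initf (insubT (fun i => i < p)%N hp) /= hinit /=.
  congr (phi (om _)); rewrite add0n subKn //; by rewrite -ltnS prednK.
case: ifP => hj1.
  by rewrite IH // addSnnS.
have -> : j = p.-1.
  move/negbT: hj1; rewrite -leqNgt => hj1; lia.
have -> : (t.+1 + p.-1 = t + p)%N by rewrite addSnnS prednK.
rewrite hrec phi_sum; apply: eq_bigr => i _.
by rewrite phiD !phiZ -hF IH.
Qed.

End VecPart.
Section Ident.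
Variable F : fieldType.
Lemma prod_ident (s : seq F) (x : F) : x \notin s ->
  let P := \prod_(z <- s) ('X - z%:P) in
  [/\ P.[x] = \prod_(z <- s) (x - z),
      P^`().[x] = P.[x] * \sum_(z <- s) (x - z)^-1 &
      P^`()^`().[x] = P.[x] * ((\sum_(z <- s) (x - z)^-1) ^+ 2
                                 - \sum_(z <- s) ((x - z)^-1) ^+ 2)].
Proof.
elim: s => [|z s IH] /=.
  by move=> _; rewrite !big_nil derivC derivC !hornerE; split => //; rewrite expr2 mulr0 subrr.
move=> hin; move: hin IH; rewrite inE negb_or => /andP [hxz hs] IH.
have [h1 h2 h3] := IH hs.
have hz : x - z != 0 by rewrite subr_eq0.
rewrite !big_cons !derivM !derivXsubC !mul1r.
set P := \prod_(j <- s) ('X - j%:P).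
rewrite derivD derivM derivXsubC mul1r.
rewrite !hornerE -/P h2 h3 h1 /=.
split.
- done.
- field; exact: hz.
- field; exact: hz.
Qed.
End Ident.

Section Core.
Variable R : realType.
Variables (p : nat) (al be : 'I_p -> R).
Hypothesis p0 : (0 < p)%N.
Local Notation C := R[i].
Local Notation re := (@complex.Re R).
Local Notation im := (@complex.Im R).

Lemma ReD (x y : C) : re (x + y) = re x + re y. Proof. by case: x => a b; case: y => c d. Qed.
Lemma ImD (x y : C) : im (x + y) = im x + im y. Proof. by case: x => a b; case: y => c d. Qed.
Lemma ReN (x : C) : re (- x) = - re x. Proof. by case: x => a b. Qed.
Lemma ImN (x : C) : im (- x) = - im x. Proof. by case: x => a b. Qed.
Lemma ReB (x y : C) : re (x - y) = re x - re y. Proof. by rewrite ReD ReN. Qed.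
Lemma ImB (x y : C) : im (x - y) = im x - im y. Proof. by rewrite ImD ImN. Qed.
Lemma ReM (x y : C) : re (x * y) = re x * re y - im x * im y. Proof. by case: x => a b; case: y => c d. Qed.
Lemma ImM (x y : C) : im (x * y) = re x * im y + im x * re y. Proof. by case: x => a b; case: y => c d. Qed.
Lemma ReV (x : C) : re (x^-1) = re x / (re x ^+ 2 + im x ^+ 2). Proof. by case: x => a b. Qed.
Lemma ImV (x : C) : im (x^-1) = - im x / (re x ^+ 2 + im x ^+ 2). Proof. by case: x => a b /=; rewrite mulNr. Qed.
Lemma Re1 : re 1 = 1. Proof. by []. Qed.
Lemma Im1 : im 1 = 0. Proof. by []. Qed.
Lemma natC n : (n%:R : C) = Complex n%:R 0.
Proof.
elim: n => [//|n IH]; rewrite -addn1 !natrD IH.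
by apply/eqP; rewrite eq_complex /= addr0 !eqxx.
Qed.
Lemma eqC (z : C) : z = Complex (re z) (im z). Proof. by case: z. Qed.

Lemma re_sum (I : Type) (s : seq I) (f : I -> C) :
  re (\sum_(i <- s) f i) = \sum_(i <- s) re (f i).
Proof. exact: (big_morph _ ReD (erefl _)). Qed.
Lemma im_sum (I : Type) (s : seq I) (f : I -> C) :
  im (\sum_(i <- s) f i) = \sum_(i <- s) im (f i).
Proof. exact: (big_morph _ ImD (erefl _)). Qed.

Definition n2 (z : C) : R := re z ^+ 2 + im z ^+ 2.
Lemma n2_ge0 z : 0 <= n2 z. Proof. by rewrite addr_ge0 ?sqr_ge0. Qed.
Lemma n2M x y : n2 (x * y) = n2 x * n2 y.
Proof. rewrite /n2 ReM ImM; ring. Qed.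
Lemma n2_eq0 z : n2 z = 0 -> z = 0.
Proof.
case: z => a b; rewrite /n2 /= => h.
have ha : a ^+ 2 = 0 by apply/eqP; rewrite eq_le sqr_ge0 andbT -h lerDl sqr_ge0.
have hb : b ^+ 2 = 0 by move: h; rewrite ha add0r.
by move/eqP: ha; rewrite sqrf_eq0 => /eqP ->; move/eqP: hb; rewrite sqrf_eq0 => /eqP ->.
Qed.
Lemma n2V z : z != 0 -> n2 (z^-1) = (n2 z)^-1.
Proof.
move=> hz; have hn : n2 z != 0 by apply: contra hz => /eqP /n2_eq0 ->.
move: hn; rewrite /n2 ReV ImV => hn; field; exact: hn.
Qed.
Lemma n2_prod (s : seq C) (f : C -> C) : n2 (\prod_(z <- s) f z) = \prod_(z <- s) n2 (f z).
Proof.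
elim: s => [|z s IH]; first by rewrite !big_nil /n2 /= expr0n /= addr0 expr1n.
by rewrite !big_cons n2M IH.
Qed.

Definition gam (m : R) (j : 'I_p) : C := Complex (be j) (- (m * al j)).
Definition isroot (m : R) (lam : C) := lam ^+ p = \sum_(j < p) gam m j * lam ^+ j.
Definition Pm m : {poly C} := 'X^p - \sum_(j < p) gam m j *: 'X^j.

Lemma Pm_horner m x : (Pm m).[x] = x ^+ p - \sum_(j < p) gam m j * x ^+ j.
Proof.
rewrite /Pm hornerD hornerN hornerXn horner_sum; congr (_ - _).
by apply: eq_bigr => j _; rewrite hornerZ hornerXn.
Qed.

Lemma size_sum_lt m : (size (- \sum_(j < p) gam m j *: 'X^j) < size ('X^p : {poly C}))%N.
Proof.
rewrite size_polyXn size_opp ltnS.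
apply: leq_trans (size_sum _ _ _) _.
apply/bigmax_leqP => j _.
by apply: leq_trans (size_scale_leq _ _) _; rewrite size_polyXn.
Qed.

Lemma roots_exist m : exists rs : seq C, size rs = p /\ Pm m = \prod_(z <- rs) ('X - z%:P).
Proof.
have [rs hrs] := closed_field_poly_normal (Pm m).
have hl : lead_coef (Pm m) = 1.
  by rewrite /Pm lead_coefDl ?size_sum_lt // lead_coefXn.
rewrite hl scale1r in hrs; exists rs; split => //.
have := size_prod_XsubC rs id; rewrite -hrs /Pm size_addl ?size_sum_lt //.
by rewrite size_polyXn => -[].
Qed.


Lemma Pm_at1 m : (Pm m).[1] = 1 - \sum_(j < p) gam m j.
Proof. rewrite Pm_horner expr1n; congr (_ - _); apply: eq_bigr => j _; by rewrite expr1n mulr1. Qed.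

Lemma Pm'_at1 m : (Pm m)^`().[1] = p%:R - \sum_(j < p) gam m j * j%:R.
Proof.
rewrite /Pm derivB derivXn raddf_sum /= hornerD hornerN hornerMn hornerXn expr1n horner_sum.
congr (_ - _); apply: eq_bigr => j _.
by rewrite derivZ derivXn hornerZ hornerMn hornerXn expr1n.
Qed.

Lemma Pm''_at1 m : (Pm m)^`()^`().[1]
   = p%:R * (p.-1)%:R - \sum_(j < p) gam m j * ((j : nat)%:R * (j.-1)%:R).
Proof.
rewrite /Pm derivB derivXn raddf_sum /= derivB derivMn derivXn raddf_sum /=.
rewrite hornerD hornerN !hornerMn hornerXn expr1n horner_sum.
congr (_ - _); first by rewrite -mulr_natl -natrM mulnC natrM mulr_natl.
apply: eq_bigr => j _.
rewrite derivZ derivXn derivZ derivMn derivXn hornerZ !hornerMn hornerXn expr1n.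
by rewrite -mulr_natr [X in _ * X]mulrC.
Qed.

Definition a0 := \sum_(j < p) al j.
Definition sb := \sum_(j < p) be j.
Definition d1 := p%:R - \sum_(j < p) be j * (j : nat)%:R.
Definition a1 := \sum_(j < p) al j * (j : nat)%:R.
Definition d2 := p%:R * (p.-1)%:R - \sum_(j < p) be j * ((j : nat)%:R * (j.-1)%:R).
Definition a2 := \sum_(j < p) al j * ((j : nat)%:R * (j.-1)%:R).

Lemma val0 m : (Pm m).[1] = Complex (1 - sb) (m * a0).
Proof.
rewrite Pm_at1 [LHS]eqC ReB ImB re_sum im_sum /= /sb /a0; congr Complex.
by rewrite sub0r sumrN opprK mulr_sumr.
Qed.

Lemma val1 m : (Pm m)^`().[1] = Complex d1 (m * a1).
Proof.
rewrite Pm'_at1 [LHS]eqC ReB ImB re_sum im_sum /d1 /a1; congr Complex.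
  rewrite natC /=; congr (_ - _); apply: eq_bigr => j _; rewrite natC ReM /=; ring.
rewrite natC /= sub0r -sumrN mulr_sumr; apply: eq_bigr => j _; rewrite natC ImM /=; ring.
Qed.

Lemma val2 m : (Pm m)^`()^`().[1] = Complex d2 (m * a2).
Proof.
rewrite Pm''_at1 [LHS]eqC ReB ImB re_sum im_sum /d2 /a2; congr Complex.
  rewrite -natrM natC /= natrM; congr (_ - _); apply: eq_bigr => j _.
  rewrite -natrM natC ReM /= natrM; ring.
rewrite -natrM natC /= sub0r -sumrN mulr_sumr; apply: eq_bigr => j _.
rewrite -natrM natC ImM /= natrM; ring.
Qed.

Lemma divi (u v c : R) : c != 0 -> (Complex u v : C) * (Complex 0 c : C)^-1 = Complex (v / c) (- u / c).
Proof.
move=> hc; rewrite [LHS]eqC ReM ImM ReV ImV /=; congr Complex; field; exact: hc.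
Qed.

Lemma wbound (z : C) (dl : R) : 0 <= dl -> n2 z < 1 - dl ->
  dl * n2 ((1 - z)^-1) <= 2 * re ((1 - z)^-1) - 1.
Proof.
move=> hdl; case: z => a b; rewrite /n2 /= => hz.
set N := (1 - a) ^+ 2 + (- b) ^+ 2.
have hN : 0 < N.
  rewrite /N; nra.
have hN' : N != 0 by rewrite gt_eqF.
rewrite !sub0r -/N -subr_ge0.
apply: (@le_trans _ _ ((1 - a ^+ 2 - b ^+ 2 - dl) / N)).
  by apply: divr_ge0; [lra | exact: ltW].
rewrite le_eqVlt; apply/orP; left; apply/eqP.
rewrite /N in hN' *; field; exact: hN'.
Qed.


Lemma elem_le_sum (s : seq C) (f : C -> R) z : (forall y, y \in s -> 0 <= f y) ->
  z \in s -> f z <= \sum_(y <- s) f y.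
Proof.
move=> hf hz; rewrite (big_rem z hz) /= lerDl big_seq_cond.
apply: sumr_ge0 => x /andP [hx _]; exact: (hf x (mem_rem hx)).
Qed.

Lemma abs_sum_bound (s : seq C) (f : C -> R) (Y : R) : (forall y, y \in s -> `|f y| <= Y) ->
  `|\sum_(y <- s) f y| <= (size s)%:R * Y.
Proof.
elim: s => [|y s IH] hf; first by rewrite big_nil normr0 mul0r.
rewrite big_cons /= -addn1 natrD mulrDl mul1r [X in _ <= X]addrC.
apply: le_trans (ler_normD _ _) _; apply: lerD.
  by apply: hf; rewrite inE eqxx.
by apply: IH => x hx; apply: hf; rewrite inE hx orbT.
Qed.

Lemma sum_bound (s : seq C) (f : C -> R) (Y : R) : (forall y, y \in s -> f y <= Y) ->
  \sum_(y <- s) f y <= (size s)%:R * Y.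
Proof.
elim: s => [|y s IH] hf; first by rewrite big_nil mul0r.
rewrite big_cons /= -addn1 natrD mulrDl mul1r [X in _ <= X]addrC; apply: lerD.
  by apply: hf; rewrite inE eqxx.
by apply: IH => x hx; apply: hf; rewrite inE hx orbT.
Qed.

Lemma prod_bound (s : seq C) (f : C -> R) (B : R) : (forall y, y \in s -> 0 <= f y <= B) ->
  \prod_(y <- s) f y <= B ^+ size s.
Proof.
elim: s => [|y s IH] hf; first by rewrite big_nil expr0.
rewrite big_cons /= exprS.
have /andP [h0 h1] := hf y (mem_head _ _).
have hs : forall x, x \in s -> 0 <= f x <= B by move=> x hx; apply: hf; rewrite inE hx orbT.
apply: ler_pM => //.
  by rewrite big_seq; apply: prodr_ge0 => x hx; have /andP [] := hs x hx.
exact: IH.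
Qed.


Lemma core_facts m (rs : seq C) (dl : R) : 0 < m -> a0 != 0 -> sb = 1 ->
  Pm m = \prod_(z <- rs) ('X - z%:P) -> 0 <= dl ->
  (forall z, z \in rs -> n2 z < 1 - dl) ->
  [/\ \sum_(z <- rs) re ((1 - z)^-1) = a1 / a0,
      \sum_(z <- rs) im ((1 - z)^-1) = - d1 / (m * a0),
      \sum_(z <- rs) (re ((1 - z)^-1) ^+ 2 - im ((1 - z)^-1) ^+ 2)
         = (a1 / a0) ^+ 2 - (d1 / (m * a0)) ^+ 2 - a2 / a0 &
      \prod_(z <- rs) n2 ((1 - z)^-1) = ((m * a0) ^+ 2)^-1].
Proof.
move=> hm ha0 hsb hrs hdl hall.
have h1 : 1 \notin rs.
  apply/negP => h; have := hall _ h; rewrite /n2 /= expr1n expr0n /= addr0; lra.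
have [e0 e1 e2] := prod_ident h1.
rewrite -hrs in e0 e1 e2.
have hma : m * a0 != 0 by rewrite mulf_neq0 // gt_eqF.
have hP1 : (Pm m).[1] = Complex 0 (m * a0) by rewrite val0 hsb subrr.
have hP1n : (Pm m).[1] != 0.
  by rewrite hP1; apply/negP => /eqP h; move: hma; rewrite -[m * a0]/(im (Complex 0 (m * a0))) h eqxx.
set S1 := \sum_(z <- rs) (1 - z)^-1 in e1 e2.
set S2 := \sum_(z <- rs) ((1 - z)^-1) ^+ 2 in e2.
have hS1 : S1 = Complex (a1 / a0) (- d1 / (m * a0)).
  have -> : S1 = (Pm m)^`().[1] * ((Pm m).[1])^-1 by rewrite e1 mulrC mulKf.
  rewrite val1 hP1 divi //; congr Complex; field; rewrite ha0 gt_eqF //.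
have hS2 : S2 = S1 ^+ 2 - Complex (a2 / a0) (- d2 / (m * a0)).
  have -> : Complex (a2 / a0) (- d2 / (m * a0)) = (Pm m)^`()^`().[1] * ((Pm m).[1])^-1.
    rewrite val2 hP1 divi //; congr Complex; field; rewrite ha0 gt_eqF //.
  by rewrite e2 mulrC mulKf // opprB addrC subrK.
split.
- by rewrite -re_sum -/S1 hS1.
- by rewrite -im_sum -/S1 hS1.
- have -> : \sum_(z <- rs) (re ((1 - z)^-1) ^+ 2 - im ((1 - z)^-1) ^+ 2) = re S2.
    rewrite /S2 re_sum; apply: eq_bigr => z _; by rewrite expr2 ReM -!expr2.
  rewrite hS2 ReB expr2 ReM hS1 /=.
  by rewrite !expr2 !mulNr !mulrN opprK.
- rewrite -(n2_prod rs (fun z => (1 - z)^-1)) prodfV -e0 hP1 n2V; last by rewrite -hP1.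
  by rewrite /n2 /= expr0n /= add0r.
Qed.


Lemma root_isroot m (rs : seq C) z : Pm m = \prod_(y <- rs) ('X - y%:P) -> z \in rs -> isroot m z.
Proof.
move=> hrs hz; have : root (Pm m) z by rewrite hrs root_prod_XsubC.
by rewrite /root Pm_horner subr_eq0 => /eqP.
Qed.

Lemma pick_root m (rs : seq C) (c : R) : Pm m = \prod_(y <- rs) ('X - y%:P) ->
  (exists z, isroot m z /\ c <= n2 z) \/ (forall z, z \in rs -> n2 z < c).
Proof.
move=> hrs; case: (boolP (has (fun z => c <= n2 z) rs)) => hh.
  by left; have [z hz hc] := hasP hh; exists z; split => //; exact: root_isroot hrs hz.
right => z hz; have := hasPn hh z hz; by rewrite -ltNge.
Qed.

Lemma core_r2 m (rs : seq C) : 0 < m -> a0 != 0 -> sb = 1 -> d1 = 0 -> size rs = p ->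
  Pm m = \prod_(z <- rs) ('X - z%:P) -> (forall z, z \in rs -> n2 z < 1 - m ^+ 2) ->
  1 <= (m * a0) ^+ 2 * (((a1 / a0) ^+ 2 + p%:R * (a1 / a0) ^+ 2
         + `|(a1 / a0) ^+ 2 - a2 / a0|) ^+ p).
Proof.
move=> hm ha0 hsb hd1 hsz hrs hall.
have hdl : 0 <= m ^+ 2 by rewrite sqr_ge0.
have [f1 f2 f3 f4] := core_facts hm ha0 hsb hrs hdl hall.
rewrite hd1 mul0r expr0n /= subr0 in f3.
set K1 := a1 / a0 in f1 f3 *.
set K2 := K1 ^+ 2 - a2 / a0 in f3 *.
set x := fun z => re ((1 - z)^-1).
set y := fun z => im ((1 - z)^-1).
have hx : forall z, z \in rs -> 1 / 2 <= x z.
  move=> z hz; have := wbound hdl (hall z hz); have := n2_ge0 ((1 - z)^-1).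
  rewrite /x => h1 h2; have : 0 <= m ^+ 2 * n2 ((1 - z)^-1) by rewrite mulr_ge0.
  lra.
have hx0 : forall z, z \in rs -> 0 <= x z.
  by move=> z hz; have := hx z hz; lra.
have hxK : forall z, z \in rs -> x z <= K1.
  by move=> z hz; rewrite -f1; exact: (elem_le_sum hx0 hz).
have hx2 : forall z, z \in rs -> x z ^+ 2 <= K1 ^+ 2.
  move=> z hz; apply: lerXn2r; rewrite ?nnegrE ?hx0 ?hxK //.
  exact: le_trans (hx0 z hz) (hxK z hz).
have hsy : \sum_(z <- rs) y z ^+ 2 <= p%:R * K1 ^+ 2 + `|K2|.
  have e : \sum_(z <- rs) y z ^+ 2 = \sum_(z <- rs) x z ^+ 2 - K2.
    by rewrite -f3 sumrB opprB addrC subrK.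
  rewrite e -hsz; apply: lerD; first exact: sum_bound.
  by rewrite -normrN ler_norm.
have hy2 : forall z, z \in rs -> y z ^+ 2 <= \sum_(z <- rs) y z ^+ 2.
  move=> z hz; apply: (elem_le_sum (f := fun z => y z ^+ 2)) => // u _; exact: sqr_ge0.
have hn2 : forall z, z \in rs -> 0 <= n2 ((1 - z)^-1) <= K1 ^+ 2 + p%:R * K1 ^+ 2 + `|K2|.
  move=> z hz; rewrite n2_ge0 /=; rewrite /n2 -/(x z) -/(y z).
  have := hx2 z hz; have := hy2 z hz; lra.
have := prod_bound hn2; rewrite f4 hsz.
have hpos : 0 < (m * a0) ^+ 2.
  by rewrite lt_neqAle sqr_ge0 andbT eq_sym sqrf_eq0 mulf_neq0 // gt_eqF.
by rewrite -[_^-1]mulr1 ler_pdivrMl.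
Qed.


Lemma core_r1 m (rs : seq C) c0 : 0 < m -> a0 != 0 -> sb = 1 -> d1 != 0 -> size rs = p ->
  Pm m = \prod_(z <- rs) ('X - z%:P) -> 0 < c0 ->
  (forall z, z \in rs -> n2 z < 1 - c0 * m ^+ 2) ->
  c0 * d1 ^+ 2 <= 2 * p%:R ^+ 2 * `|a1 / a0| * a0 ^+ 2.
Proof.
move=> hm ha0 hsb hd1 hsz hrs hc0 hall.
set dl := c0 * m ^+ 2 in hall.
have hdl : 0 < dl by rewrite mulr_gt0 // exprn_gt0.
have [f1 f2 f3 f4] := core_facts hm ha0 hsb hrs (ltW hdl) hall.
set K1 := a1 / a0 in f1 *.
set x := fun z => re ((1 - z)^-1).
set y := fun z => im ((1 - z)^-1).
have hw : forall z, z \in rs -> dl * n2 ((1 - z)^-1) <= 2 * x z - 1.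
  move=> z hz; exact: (wbound (ltW hdl) (hall z hz)).
have hx : forall z, z \in rs -> 1 / 2 <= x z.
  move=> z hz; have := hw z hz; have := n2_ge0 ((1 - z)^-1) => h1 h2.
  have : 0 <= dl * n2 ((1 - z)^-1) by rewrite mulr_ge0 // ltW.
  lra.
have hx0 : forall z, z \in rs -> 0 <= x z.
  by move=> z hz; have := hx z hz; lra.
have hxK : forall z, z \in rs -> x z <= K1.
  by move=> z hz; rewrite -f1; exact: (elem_le_sum hx0 hz).
have hyb : forall z, z \in rs -> y z ^+ 2 * dl <= 2 * `|K1|.
  move=> z hz; have := hw z hz; have := hxK z hz; have := ler_norm K1.
  have : y z ^+ 2 * dl <= dl * n2 ((1 - z)^-1).
    rewrite mulrC ler_wpM2l ?(ltW hdl) // /n2 -/(x z) -/(y z) lerDr sqr_ge0 //.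
  lra.
set Y := Num.sqrt (2 * `|K1| / dl).
have hY : forall z, z \in rs -> `|y z| <= Y.
  move=> z hz; rewrite -sqrtr_sqr ler_sqrt; last by rewrite divr_ge0 ?mulr_ge0 // ltW.
  by rewrite ler_pdivlMr // hyb.
have hs := abs_sum_bound hY; rewrite hsz in hs.
have hs2 : (\sum_(z <- rs) y z) ^+ 2 * dl <= p%:R ^+ 2 * (2 * `|K1|).
  have h2 : (\sum_(z <- rs) y z) ^+ 2 <= (p%:R * Y) ^+ 2.
    rewrite -real_normK ?num_real //; apply: lerXn2r => //; rewrite nnegrE //.
    by rewrite mulr_ge0 // sqrtr_ge0.
  rewrite exprMn sqr_sqrtr in h2; last by rewrite divr_ge0 ?mulr_ge0 // ltW.
  by rewrite -ler_pdivlMr // -mulrA.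
rewrite /y f2 /dl in hs2.
have e : (- d1 / (m * a0)) ^+ 2 * (c0 * m ^+ 2) = c0 * d1 ^+ 2 / a0 ^+ 2.
  field; rewrite ha0 gt_eqF //.
rewrite e ler_pdivrMr in hs2; last by rewrite lt_neqAle sqr_ge0 andbT eq_sym sqrf_eq0.
apply: le_trans hs2 _; rewrite le_eqVlt; apply/orP; left; apply/eqP; ring.
Qed.


Lemma core : sb = 1 -> exists m0 c0 : R, 0 < m0 /\ 0 < c0 /\
  forall m, 0 < m -> m <= m0 -> exists lam, isroot m lam /\ 1 - c0 * m ^+ 2 <= n2 lam.
Proof.
move=> hsb.
have [ha0|ha0] := eqVneq a0 0.
  exists 1, 1; split => //; split => // m hm _; exists 1; split.
    rewrite /isroot expr1n.
    have -> : \sum_(j < p) gam m j * 1 ^+ j = \sum_(j < p) gam m j.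
      by apply: eq_bigr => j _; rewrite expr1n mulr1.
    rewrite [RHS]eqC re_sum im_sum /gam /=.
    have -> : \sum_(j < p) - (m * al j) = - (m * a0) by rewrite sumrN mulr_sumr.
    by rewrite -/sb hsb ha0 mulr0 oppr0.
  by rewrite /n2 /= expr1n expr0n /= addr0 mul1r; have := sqr_ge0 m; lra.
have [hd1|hd1] := eqVneq d1 0.
  set B := (a1 / a0) ^+ 2 + p%:R * (a1 / a0) ^+ 2 + `|(a1 / a0) ^+ 2 - a2 / a0|.
  have hB : 0 <= B.
    rewrite /B; apply: addr_ge0; last exact: normr_ge0.
    by apply: addr_ge0; [exact: sqr_ge0 | apply: mulr_ge0; [exact: ler0n | exact: sqr_ge0]].
  set E := (B + 1) ^+ p.
  have hE : 1 <= E by rewrite /E exprn_ege1 // lerDr.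
  have hBE : B ^+ p <= E by rewrite /E lerXn2r ?nnegrE ?lerDl // addr_ge0.
  have hBp : 0 <= B ^+ p by rewrite exprn_ge0.
  exists ((`|a0| * E + 1)^-1), 1; split.
    by rewrite invr_gt0 ltr_wpDl // mulr_ge0 // (le_trans ler01 hE).
  split => // m hm hmm.
  have [rs [hsz hrs]] := roots_exist m.
  case: (pick_root (1 - 1 * m ^+ 2) hrs) => [//|hall].
  exfalso; rewrite mul1r in hall.
  have := core_r2 hm ha0 hsb hd1 hsz hrs hall; rewrite -/B.
  have hpos : 0 < `|a0| * E + 1 by rewrite ltr_wpDl // mulr_ge0 // (le_trans ler01 hE).
  move: hmm; rewrite -div1r ler_pdivlMr // => hmm.
  set t := m * `|a0|.
  have ht : 0 <= t by rewrite mulr_ge0 // ltW.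
  have htE : t * E < 1 by move: hmm; rewrite /t mulrDr mulr1 mulrA; lra.
  have ht1 : t < 1 by apply: le_lt_trans htE; rewrite ler_peMr.
  have -> : (m * a0) ^+ 2 = t ^+ 2 by rewrite /t !exprMn real_normK // num_real.
  have h1 : t ^+ 2 * B ^+ p <= t ^+ 2 * E by rewrite ler_wpM2l ?sqr_ge0.
  have h2 : t ^+ 2 * E <= t * E.
    rewrite expr2 -mulrA ler_piMl //; first by rewrite mulr_ge0 // (le_trans ler01 hE).
    exact: ltW.
  lra.
set K1 := a1 / a0.
set c0 := (2 * p%:R ^+ 2 * `|K1| * a0 ^+ 2 + 1) / d1 ^+ 2.
have hd2 : 0 < d1 ^+ 2 by rewrite lt_neqAle sqr_ge0 andbT eq_sym sqrf_eq0.
have hc0 : 0 < c0.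
  rewrite /c0 divr_gt0 // ltr_wpDl //; apply: mulr_ge0; last exact: sqr_ge0.
  by apply: mulr_ge0; [apply: mulr_ge0; [by [] | exact: sqr_ge0] | exact: normr_ge0].
exists 1, c0; split => //; split => // m hm _.
have [rs [hsz hrs]] := roots_exist m.
case: (pick_root (1 - c0 * m ^+ 2) hrs) => [//|hall].
exfalso; have := core_r1 hm ha0 hsb hd1 hsz hrs hc0 hall.
rewrite /c0 -/K1 mulrAC -mulrA divff ?gt_eqF // mulr1; lra.
Qed.

End Core.
Section Final.
Variable R : realType.
Local Notation C := R[i].
Local Notation re := (@complex.Re R).
Local Notation im := (@complex.Im R).

Lemma n2X (x : C) n : n2 (x ^+ n) = n2 x ^+ n.
Proof. elim: n => [|n IH]; first by rewrite !expr0 /n2 /= expr1n expr0n /= addr0.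
by rewrite !exprS n2M IH. Qed.

Lemma n2R (a : R) : n2 (Complex a 0) = a ^+ 2.
Proof. by rewrite /n2 /= expr0n /= addr0. Qed.

Lemma abs_le_of_n2 (w : C) (D : R) : 0 <= D -> n2 w <= D ^+ 2 -> `|re w| <= D /\ `|im w| <= D.
Proof.
move=> hD hw; split.
  rewrite -sqrtr_sqr -(ger0_norm hD) -[`|D|]sqrtr_sqr ler_sqrt ?sqr_ge0 //.
  by apply: le_trans hw; rewrite /n2 lerDl sqr_ge0.
rewrite -sqrtr_sqr -(ger0_norm hD) -[`|D|]sqrtr_sqr ler_sqrt ?sqr_ge0 //.
by apply: le_trans hw; rewrite /n2 lerDr sqr_ge0.
Qed.

Lemma sum_abs_ge (w : C) (D : R) : 0 <= D -> D ^+ 2 / 2 <= n2 w -> D / 2 <= `|re w| + `|im w|.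
Proof.
move=> hD; rewrite /n2 -(real_normK (num_real (re w))) -(real_normK (num_real (im w))).
have := normr_ge0 (re w); have := normr_ge0 (im w).
move: (`|re w|) (`|im w|) => a b ha hb h; nra.
Qed.

Lemma bern (x : R) n : 0 <= x -> x <= 1 -> 1 - n%:R * x <= (1 - x) ^+ n.
Proof.
move=> h0 h1; elim: n => [|n IH]; first by rewrite mul0r subr0 expr0.
rewrite exprS -addn1 natrD mulrDl mul1r.
have : (1 - x) * (1 - n%:R * x) <= (1 - x) * (1 - x) ^+ n by rewrite ler_wpM2l // subr_ge0.
have : 0 <= n%:R * x ^+ 2 by rewrite mulr_ge0 ?ler0n ?sqr_ge0.
nra.
Qed.

Lemma sumC p (al be : 'I_p -> R) (u v : C) :
  \sum_(i < p) (Complex (al i) 0 * u + Complex (be i) 0 * v)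
  = Complex (a0 al) 0 * u + Complex (sb be) 0 * v.
Proof.
rewrite big_split -!mulr_suml; congr (_ * _ + _ * _); rewrite [LHS]eqC /a0 /sb re_sum im_sum /=;
  by congr Complex; apply: big1.
Qed.

End Final.

Section Cases.
Variable R : realType.
Local Notation C := R[i].
Local Notation re := (@complex.Re R).
Local Notation im := (@complex.Im R).

Definition Goal (k : nat) (l D : R) p (al be : 'I_p -> R) :=
  exists cA TA : R, 0 < cA /\ 0 < TA /\
    forall T : nat, TA <= T%:R ->
    exists (M : 'M[R]_k) (b1 b2 : 'rV[R]_k),
      in_Fbil l D M b1 b2 /\
      exists init : 'I_p -> 'rV[R]_(k + k),
        (forall i, inD D (init i)) /\
        exists kk : 'I_p,
          cA * l * D ^+ 2 / Num.sqrt (T%:R)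
            <= gap M b1 b2 (2 * D)
                 (scli_z al be (bil_F M b1 b2) init (T + kk)).

Lemma sqrtT_ge1 (T : nat) : (1 : R) <= T%:R -> 1 <= Num.sqrt (T%:R : R).
Proof. by move=> h; rewrite -[X in X <= _]sqrtr1 ler_sqrt //; apply: le_trans h. Qed.

Lemma caseA k (i0 : 'I_k) (l D : R) p (al be : 'I_p -> R) :
  0 < l -> 0 < D -> (0 < p)%N -> sb be != 1 -> Goal k l D al be.
Proof.
move=> hl hD hp hsb.
set e := 1 - sb be; set A := l * a0 al; set N := e ^+ 2 + A ^+ 2.
have he : e != 0 by rewrite /e subr_eq0 eq_sym.
have he2 : 0 < e ^+ 2 by rewrite lt_neqAle sqr_ge0 andbT eq_sym sqrf_eq0.
have hN : 0 < N by rewrite /N ltr_pwDl // sqr_ge0.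
have hN0 : N != 0 by rewrite gt_eqF.
have hsbe : sb be = 1 - e by rewrite /e opprB addrC subrK.
set X := A ^+ 2 * D / N; set Y := A * e * D / N.
exists (2 * e ^+ 2 / N), 1; split; first by rewrite divr_gt0 // mulr_gt0.
split => // T hT.
exists (l%:M), 0, (- (l * D) *: e0 R i0); split; first exact: (Fbil_ok i0 hl (lexx l) (ltW hD) (lexx D)).
exists (fun _ => phi i0 (Complex X Y)); split.
  move=> i; have [h1 h2] : `|re (Complex X Y)| <= D /\ `|im (Complex X Y)| <= D.
    apply: abs_le_of_n2; first exact: ltW.
    have -> : n2 (Complex X Y) = D ^+ 2 * (A ^+ 2 / N).
      by rewrite /n2 /= /X /Y /N; field; rewrite -/N.
    rewrite ler_piMr ?sqr_ge0 // ler_pdivrMr // mul1r /N lerDr sqr_ge0 //.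
  exact: inD_phi.
exists (Ordinal hp).
have hz : scli_z al be (bil_F (l%:M) 0 (- (l * D) *: e0 R i0))
    (fun _ => phi i0 (Complex X Y)) (T + Ordinal hp) = phi i0 (Complex X Y).
  rewrite /scli_z (@scli_phi _ _ i0 _ _ _ _ (fun w => Complex (l * im w) (l * (D - re w)))
     (fun _ => Complex X Y)) //.
  - by move=> w; rewrite F_phi.
  - move=> t; rewrite sumC [RHS]eqC ReD ImD !ReM !ImM /= hsbe; congr Complex.
      by rewrite /X /Y /A; clearbody N; field.
    rewrite /X /Y; move: hN0; rewrite /N /A => hN0'; field; exact: hN0'.
  - lia.
rewrite hz; apply: le_trans (gap_phi i0 (Complex X Y) hl hD (ltW hD) (lexx D)).
rewrite /=.
have -> : X - D = - (e ^+ 2 * D / N) by rewrite /X /N; field; rewrite -/N.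
rewrite normrN ger0_norm; last first.
  by apply: divr_ge0; [apply: mulr_ge0; [exact: sqr_ge0|exact: ltW] | exact: ltW].
apply: (@le_trans _ _ (2 * e ^+ 2 / N * l * D ^+ 2)).
  have hs := sqrtT_ge1 hT.
  rewrite ler_pdivrMr ?(lt_le_trans ltr01 hs) // ler_peMr //.
  apply: mulr_ge0; last exact: sqr_ge0.
  apply: mulr_ge0; last exact: ltW.
  apply: divr_ge0; last exact: ltW.
  by apply: mulr_ge0; [by [] | exact: sqr_ge0].
have : 0 <= l * D * `|Y| by rewrite !mulr_ge0 // ltW.
have -> : 2 * e ^+ 2 / N * l * D ^+ 2 = l * D * (2 * (e ^+ 2 * D / N)) by field.
lra.
Qed.


Lemma caseB k (i0 : 'I_k) (l D : R) p (al be : 'I_p -> R) :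
  0 < l -> 0 < D -> (0 < p)%N -> sb be = 1 -> Goal k l D al be.
Proof.
move=> hl hD hp hsb.
have [m0 [c0 [hm0 [hc0 hcore]]]] := core al hsb.
have hq0 : 0 < 2 * c0 * p%:R + 1 by rewrite ltr_wpDl // !mulr_ge0 // ltW.
set m1 := Order.min (Order.min m0 l) ((2 * c0 * p%:R + 1)^-1).
have hm1 : 0 < m1 by rewrite /m1 !lt_min hm0 hl invr_gt0 hq0.
have hm1m0 : m1 <= m0 by rewrite /m1 !ge_min lexx.
have hm1l : m1 <= l by rewrite /m1 !ge_min lexx orbT.
have hm1c : m1 * (2 * c0 * p%:R + 1) <= 1.
  by rewrite -ler_pdivlMr // div1r /m1 ge_min lexx orbT.
have hq : c0 * p%:R * m1 ^+ 2 <= 1 / 2.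
  have h1 : 0 <= c0 * p%:R * m1 by rewrite !mulr_ge0 // ltW.
  have h2 : m1 <= 1 by move: hm1c; have := h1; nra.
  have : c0 * p%:R * m1 ^+ 2 <= c0 * p%:R * m1.
    by rewrite expr2 mulrA ler_piMr.
  move: hm1c; nra.
exists (m1 / (2 * l)), 1; split; first by rewrite divr_gt0 // mulr_gt0.
split => // T hT.
have hs := sqrtT_ge1 hT.
have hs0 : 0 < Num.sqrt (T%:R : R) by apply: lt_le_trans hs.
set sT := Num.sqrt (T%:R : R) in hs hs0 *.
have hsT2 : sT ^+ 2 = T%:R by rewrite sqr_sqrtr // ler0n.
set m := m1 / sT.
have hm : 0 < m by rewrite divr_gt0.
have hmm : m <= m1 by rewrite ler_pdivrMr // ler_peMr // ltW.
have [lam [hroot hlam]] := hcore m hm (le_trans hmm hm1m0).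
set u0 : C := Complex D 0 * (if n2 lam <= 1 then 1 else (lam ^+ p.-1)^-1).
set om := fun t => lam ^+ t * u0.
have hbound : forall j, (j <= p.-1)%N -> n2 (om j) <= D ^+ 2.
  move=> j hj; rewrite /om /u0 !n2M n2R n2X; case: ifP => h.
    rewrite /n2 /= expr1n expr0n /= addr0 mulr1 ler_piMl ?sqr_ge0 //.
    by rewrite exprn_ile1 ?n2_ge0.
  have h1 : 1 < n2 lam by rewrite ltNge h.
  have hl0 : lam ^+ p.-1 != 0.
    rewrite expf_neq0 //; apply/negP => /eqP h0; move: h1; rewrite h0 /n2 /= expr0n /= addr0; lra.
  rewrite n2V // n2X mulrCA ler_piMr ?sqr_ge0 //.
  rewrite mulrC ler_pdivrMl ?mulr1; last by rewrite exprn_gt0 // (lt_trans ltr01 h1).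
  by rewrite ler_weXn2l // ltW.
exists (m%:M), 0, (- (m * 0) *: e0 R i0).
split; first exact: (Fbil_ok i0 hm (le_trans hmm hm1l) (lexx 0) (ltW hD)).
exists (fun i : 'I_p => phi i0 (om (p.-1 - i)%N)); split.
  move=> i; have [h1 h2] := abs_le_of_n2 (ltW hD) (hbound (p.-1 - i)%N (leq_subr _ _)).
  exact: inD_phi.
exists (Ordinal hp).
have hz : scli_z al be (bil_F (m%:M) 0 (- (m * 0) *: e0 R i0))
    (fun i : 'I_p => phi i0 (om (p.-1 - i)%N)) (T + Ordinal hp) = phi i0 (om (T + p.-1)%N).
  rewrite /scli_z (@scli_phi _ _ i0 _ _ _ _ (fun w => Complex (m * im w) (m * (0 - re w))) om) //=.
  - by rewrite addn0.
  - by move=> w; rewrite F_phi.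
  - move=> t.
    have hg : forall i : 'I_p, Complex (al i) 0 * Complex (m * im (om (t + i)%N)) (m * (0 - re (om (t + i)%N)))
        + Complex (be i) 0 * om (t + i)%N = gam al be m i * lam ^+ i * (lam ^+ t * u0).
      move=> i; rewrite /om.
      have -> : gam al be m i * lam ^+ i * (lam ^+ t * u0) = gam al be m i * (lam ^+ (t + i) * u0).
        by rewrite exprD; ring.
      move: (lam ^+ (t + i) * u0) => w.
      rewrite [LHS]eqC [RHS]eqC ReD ImD !ReM !ImM /gam /=; congr Complex; ring.
    rewrite (eq_bigr _ (fun i _ => hg i)) -mulr_suml /om exprD hroot.
    by rewrite [RHS]mulrCA mulrA.
  - by move: hp; clear; lia.
rewrite hz; apply: le_trans (gap_phi i0 (om (T + p.-1)%N) hm hD (lexx 0) (ltW hD)).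
have hn2 : D ^+ 2 / 2 <= n2 (om (T + p.-1)%N).
  rewrite /om /u0 n2M n2M n2R n2X; case: ifP => h.
    rewrite /n2 /= expr1n expr0n /= addr0 mulr1.
    set x := c0 * m ^+ 2.
    have hx0 : 0 <= x by rewrite mulr_ge0 ?sqr_ge0 // ltW.
    have hxT : x * T%:R = c0 * m1 ^+ 2.
      by rewrite /x /m expr_div_n hsT2; field; rewrite -hsT2 expf_neq0 // gt_eqF.
    have hT0 : (0 : R) < T%:R by apply: lt_le_trans hT.
    have hN : (T + p.-1)%:R * x <= 1 / 2.
      have hpT : ((T + p.-1)%N%:R : R) <= p%:R * T%:R.
        rewrite -natrM ler_nat; move: hT; rewrite (ler_nat R 1 T) => hT1; clear -hT1 hp; nia.
      apply: le_trans hq.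
      have -> : c0 * p%:R * m1 ^+ 2 = p%:R * T%:R * x.
        have -> : p%:R * T%:R * x = p%:R * (x * T%:R) by ring.
        rewrite hxT; ring.
      by rewrite ler_wpM2r.
    have hx1 : x <= 1.
      have : x <= (T + p.-1)%:R * x.
        by rewrite ler_peMl // natrD ler_wpDr // ?ler0n // (le_trans hT) // ler_nat.
      lra.
    have h1 : (1 - x) ^+ (T + p.-1) <= n2 lam ^+ (T + p.-1).
      by apply: lerXn2r; rewrite ?nnegrE ?subr_ge0 ?n2_ge0 //; lra.
    have h2 := bern (T + p.-1) hx0 hx1.
    have : 1 / 2 <= n2 lam ^+ (T + p.-1) by lra.
    have := sqr_ge0 D; nra.
  have h1 : 1 < n2 lam by rewrite ltNge h.
  have hl0 : lam ^+ p.-1 != 0.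
    rewrite expf_neq0 //; apply/negP => /eqP h0; move: h1; rewrite h0 /n2 /= expr0n /= addr0; lra.
  rewrite n2V // n2X exprD.
  have hne : n2 lam ^+ p.-1 != 0 by rewrite expf_neq0 // gt_eqF // (lt_trans ltr01 h1).
  have -> : n2 lam ^+ T * n2 lam ^+ p.-1 * (D ^+ 2 / n2 lam ^+ p.-1) = n2 lam ^+ T * D ^+ 2.
    by field.
  have : 1 <= n2 lam ^+ T by rewrite exprn_ege1 // ltW.
  have := sqr_ge0 D; nra.
have hsum := sum_abs_ge (ltW hD) hn2.
set w := om (T + p.-1)%N in hsum *.
rewrite subr0.
have -> : m1 / (2 * l) * l * D ^+ 2 / sT = m * D * (D / 2).
  by rewrite /m; field; rewrite !gt_eqF.
have hmD : 0 <= m * D by apply: mulr_ge0; exact: ltW.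
have : 0 <= m * D * `|re w| by apply: mulr_ge0.
have : m * D * (D / 2) <= m * D * (`|re w| + `|im w|) by rewrite ler_wpM2l.
lra.
Qed.

End Cases.
Theorem theorem7 (R : realType) (n : nat) (l D : R) :
  ~~ odd n -> (0 < n)%N -> 0 < l -> 0 < D ->
  forall (p : nat) (alpha beta : 'I_p -> R), (0 < p)%N ->
  exists cA TA : R, 0 < cA /\ 0 < TA /\
    forall T : nat, TA <= T%:R ->
    exists (M : 'M[R]_(n./2)) (b1 b2 : 'rV[R]_(n./2)),
      in_Fbil l D M b1 b2 /\
      exists init : 'I_p -> 'rV[R]_(n./2 + n./2),
        (forall i, inD D (init i)) /\
        exists k : 'I_p,
          cA * l * D ^+ 2 / Num.sqrt (T%:R)
            <= gap M b1 b2 (2 * D)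
                 (scli_z alpha beta (bil_F M b1 b2) init (T + k)).
Proof.
move=> hodd hn hl hD p al be hp.
have hk : (0 < n./2)%N.
  by rewrite half_gt0; move: hodd hn; clear; case: n => [|[|n]].
have [hsb|hsb] := eqVneq (sb be) 1.
  exact: (caseB (Ordinal hk) al hl hD hp hsb).
exact: (caseA (Ordinal hk) al hl hD hp hsb).
Qed.
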